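(* Let $k\ge 2$, $n\ge1$ be integers, let $\bar{\mathcal{P}}\in\mathbb{R}^{[k,n]}$ be a columnwise-substochastic tensor, $\mathbf{v}\in\mathbb{R}^n$ a stochastic vector and $\alpha\in[0,1)$. Let $\Delta:=\{\mathbf{y}\in\mathbb{R}^n_+:\mathbf{e}^T\mathbf{y}\le(1-\alpha)^{-\frac{1}{k-1}}\}$ and let $\mathbf{y}_*\in\Delta$. Then $\mathbf{y}_*$ solves the MLPPR system $(\mathbf{e}^T\mathbf{y})^{k-2}\mathbf{y}-\alpha\bar{\mathcal{P}}\mathbf{y}^{k-1}=\mathbf{v}$ if and only if $\mathbf{y}_*$ is a fixed point of the continuous map $$\Phi(\mathbf{y}):=\left(1+\alpha\mathbf{e}^T(\bar{\mathcal{P}}\mathbf{y}^{k-1})\right)^{-\frac{k-2}{k-1}}\left(\mathbf{v}+\alpha\bar{\mathcal{P}}\mathbf{y}^{k-1}\right).$$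
   Context: For $\mathcal{P}\in\mathbb{R}^{[k,n]}$ (real tensors of order $k$, dimension $n$) and $\mathbf{y}\in\mathbb{R}^n$, $(\mathcal{P}\mathbf{y}^{k-1})_i=\sum_{i_2,\dots,i_k}p_{i i_2\dots i_k}y_{i_2}\cdots y_{i_k}$. $\bar{\mathcal{P}}$ is columnwise-substochastic if its entries are nonnegative and $\sum_{i}\bar p_{i i_2\dots i_k}\le1$ for all $i_2,\dots,i_k$. $\mathbf{e}$ is the all-ones vector; a stochastic vector is nonnegative with entries summing to $1$. The MLPPR system $(I\circ\mathbf{e}^{\circ(k-2)}-\alpha\bar{\mathcal{P}})\mathbf{y}^{k-1}=\mathbf{v}$ is exactly $(\mathbf{e}^T\mathbf{y})^{k-2}\mathbf{y}-\alpha\bar{\mathcal{P}}\mathbf{y}^{k-1}=\mathbf{v}$. *)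

(* Defs.v *)
From HB Require Import structures.
From mathcomp Require Import all_boot all_order all_algebra.
From mathcomp Require Import reals exp.
Set Implicit Arguments. Unset Strict Implicit. Unset Printing Implicit Defensive.
Import Order.TTheory GRing.Theory Num.Theory.
Local Open Scope ring_scope.

(* A real tensor of order k and dimension n: entry p_{i i_2 ... i_k} is
   P i f where f : 'I_(k.-1) -> 'I_n lists the indices (i_2,...,i_k). *)
Definition tensor (R : realType) (k n : nat) :=
  'I_n -> {ffun 'I_k.-1 -> 'I_n} -> R.

Definition tapply (R : realType) (k n : nat) (P : tensor R k n)
  (y : 'I_n -> R) : 'I_n -> R :=
  fun i => \sum_(f : {ffun 'I_k.-1 -> 'I_n}) P i f * \prod_(j < k.-1) y (f j).

Definition esum (R : realType) (n : nat) (y : 'I_n -> R) : R :=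
  \sum_(i < n) y i.

Definition columnwise_substochastic (R : realType) (k n : nat)
  (P : tensor R k n) : Prop :=
  (forall i f, 0 <= P i f) /\ (forall f, \sum_(i < n) P i f <= 1).

Definition stochastic_vec (R : realType) (n : nat) (v : 'I_n -> R) : Prop :=
  (forall i, 0 <= v i) /\ esum v = 1.

Definition Delta (R : realType) (k n : nat) (alpha : R) (y : 'I_n -> R) : Prop :=
  (forall i, 0 <= y i) /\
  esum y <= powR (1 - alpha) (- ((k.-1)%:R)^-1).

Definition MLPPR (R : realType) (k n : nat) (alpha : R) (P : tensor R k n)
  (v y : 'I_n -> R) : Prop :=
  forall i, esum y ^+ (k - 2) * y i - alpha * tapply P y i = v i.

Definition Phi (R : realType) (k n : nat) (alpha : R) (P : tensor R k n)
  (v y : 'I_n -> R) : 'I_n -> R :=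
  fun i => powR (1 + alpha * esum (tapply P y))
                (- ((k - 2)%:R / (k.-1)%:R)) * (v i + alpha * tapply P y i).

(* Main.v *)
Require Import Defs.
From HB Require Import structures.
From mathcomp Require Import all_boot all_order all_algebra.
From mathcomp Require Import reals exp.
From mathcomp Require Import ring.
From Stdlib Require Import FunctionalExtensionality.
Import Order.TTheory GRing.Theory Num.Theory.
Local Open Scope ring_scope.

Theorem lemma3p5 (R : realType) (k n : nat) (hk : (2 <= k)%N) (hn : (1 <= n)%N)
  (P : tensor R k n) (v : 'I_n -> R) (alpha : R)
  (hP : columnwise_substochastic P) (hv : stochastic_vec v)
  (ha0 : 0 <= alpha) (ha1 : alpha < 1)
  (ystar : 'I_n -> R) (hy : Delta k alpha ystar) :
  MLPPR alpha P v ystar <-> Phi alpha P v ystar = ystar.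
Proof.
case: k hk P hP hy => [|[|j]] // _ P hP hy.
have hj : (j.+2 - 2 = j)%N by rewrite subn2.
rewrite /MLPPR /Phi hj /=.
set y := ystar.
set T := tapply P y.
set s := esum y.
have hT : forall i, 0 <= T i.
  move=> i; rewrite /T /tapply; apply: sumr_ge0 => f _.
  apply: mulr_ge0; first exact: hP.1.
  by apply: prodr_ge0 => l _; apply: hy.1.
have ht : 0 <= esum T by apply: sumr_ge0 => i _.
set u := 1 + alpha * esum T.
have hu : 0 < u by rewrite /u; apply: (lt_le_trans ltr01); rewrite lerDl mulr_ge0.
have hs0 : 0 <= s by apply: sumr_ge0 => i _; apply: hy.1.
have hsum : forall c, esum (fun i => c * (v i + alpha * T i)) = c * u.
  move=> c; rewrite /esum -mulr_sumr big_split /= -mulr_sumr.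
  by have := hv.2; rewrite /esum => ->.
have hm : (j.+1%:R : R) != 0 by rewrite pnatr_eq0.
rewrite /powR (gt_eqF hu).
split.
- move=> H.
  have Hi : forall i, s ^+ j * y i = v i + alpha * T i.
    by move=> i; rewrite -(H i) subrK.
  have hsu : s ^+ j.+1 = u.
    rewrite -(mul1r u) -hsum /esum exprSr -/s /s /esum mulr_sumr.
    by apply: eq_bigr => i _; rewrite mul1r Hi.
  have hs : 0 < s.
    rewrite lt_neqAle hs0 andbT; apply/negP => /eqP s0.
    by move: hu; rewrite -hsu -s0 expr0n /= ltxx.
  apply: functional_extensionality => i; rewrite -Hi mulrA.
  rewrite -hsu lnXn // -{2}(lnK hs) -expRM_natl -expRD.
  suff -> : (- (j%:R / j.+1%:R) * (ln s *+ j.+1) + j%:R * ln s) = 0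
    by rewrite expR0 mul1r.
  rewrite -[ln s *+ _]mulr_natr; field; by rewrite addrC natr1 pnatr_eq0.
- move=> H.
  set c := sequences.expR (- (j%:R / j.+1%:R) * ln u).
  have Hs : s = c * u.
    rewrite -hsum /s; congr esum; by rewrite -{1}H.
  have Hi : forall i, y i = c * (v i + alpha * T i).
    by move=> i; rewrite -{1}H.
  move=> i; rewrite Hi mulrA.
  have -> : s ^+ j * c = 1.
    rewrite Hs -{1}(lnK hu) /c -expRD -expRM_natl -expRD.
    apply: (eq_trans _ (expR0 R)); congr sequences.expR; field; by rewrite addrC natr1 pnatr_eq0.
  by rewrite mul1r addrK.
Qed.
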